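(* Let $d$ be an integer and let $b,\alpha,\beta\in\mathbb{Z}_{\ge0}^n$ satisfy $\alpha_1\le\cdots\le\alpha_n=d$, $\beta_1\le\cdots\le\beta_n=d$, $\alpha_i\le\beta_i$ for all $i$, $\alpha_1=0$ and $\beta_1=b_1$. Let $I\subseteq S=K[x_1,\ldots,x_n]$ be the ideal generated by all monomials $x^u$ with $u\in\mathbb{Z}_{\ge0}^n$, $0\le u_i\le b_i$ and $\alpha_i\le u_1+\cdots+u_i\le\beta_i$ for $i=1,\ldots,n$. Then $\mathrm{depth}(S/I)=0$ if and only if all of the following hold: (i) $b_i\ge1$ for all $i=1,\ldots,n$; (ii) $\alpha_i\le\beta_i-1$ for $i=2,\ldots,n-1$; (iii) $\beta_i+b_{i+1}+\cdots+b_j\ge\alpha_j+j-i+1$ for all $1\le i\le j\le n-1$; (iv) $\beta_i+b_{i+1}+\cdots+b_n\ge d+n-i$ for all $1\le i\le n$.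
   Context: $K$ is a field. $I$ is a polymatroidal ideal (a basic PLP-polymatroidal ideal of type $(\mathbf{0},b\mid\alpha,\beta)$), generated in degree $d$. *)

(* Defs.v *)
From HB Require Import structures.
From mathcomp Require Import all_boot all_order all_algebra.
From mathcomp Require Import multinomials.mpoly.
Set Implicit Arguments. Unset Strict Implicit. Unset Printing Implicit Defensive.
Import GRing.Theory.
Local Open Scope ring_scope.

Section Defs.
Variables (K : fieldType) (n : nat).

Definition in_ideal (G : {mpoly K[n]} -> Prop) (f : {mpoly K[n]}) : Prop :=
  exists s : seq ({mpoly K[n]} * {mpoly K[n]}),
    (forall p, p \in s -> G p.2) /\ f = \sum_(p <- s) p.1 * p.2.

Definition in_max_ideal (f : {mpoly K[n]}) : Prop := f@_0%MM = 0.

Definition regular_on_quot (I : {mpoly K[n]} -> Prop) (f : {mpoly K[n]}) : Prop :=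
  forall g, I (f * g) -> I g.

(* depth(S/I) = 0 : S/I <> 0 and there is no S/I-regular element in m,
   i.e. the maximal length of an S/I-regular sequence in m is 0 *)
Definition depth_quot_zero (I : {mpoly K[n]} -> Prop) : Prop :=
  ~ I 1 /\ forall f, in_max_ideal f -> ~ regular_on_quot I f.

End Defs.

(* generators of the PLP-polymatroidal ideal, 0-based indices:
   u_i <= b_i and alpha_i <= u_0 + ... + u_i <= beta_i for all i < n *)
Definition plp_gen (K : fieldType) (n : nat) (b alpha beta : nat -> nat)
    (f : {mpoly K[n]}) : Prop :=
  exists u : 'X_{1..n},
    f = 'X_[u] /\
    forall i : 'I_n,
      (u i <= b i)%N /\
      (alpha i <= \sum_(j : 'I_n | (j <= i)%N) u j <= beta i)%N.

(* Main.v *)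
Require Import Defs.
From HB Require Import structures.
From mathcomp Require Import all_boot all_order all_algebra.
From mathcomp Require Import multinomials.mpoly.
From Stdlib Require Import Classical.
From mathcomp Require Import zify.
Set Implicit Arguments. Unset Strict Implicit. Unset Printing Implicit Defensive.
Import GRing.Theory.
Local Open Scope nat_scope.

Lemma sumB1 (b : nat -> nat) a c : (forall k, a <= k < c -> 0 < b k) ->
  \sum_(a <= k < c) b k = \sum_(a <= k < c) (b k - 1) + (c - a).
Proof.
move=> H; rewrite -[c - a]muln1 -sum_nat_const_nat -big_split /=.
by apply: eq_big_nat => k /H; lia.
Qed.

Lemma sum_eqk0 c k : \sum_(0 <= j < c) (j == k) = (k < c).
Proof.
elim: c => [|c IH]; first by rewrite big_geq.
rewrite big_nat_recr //= IH; case: (ltngtP k c) => h; try lia.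
Qed.

Section Comb.
Variables (n d : nat) (b al be : nat -> nat).
Hypothesis Hn : 0 < n.
Hypothesis Ha : forall i, i.+1 < n -> al i <= al i.+1.
Hypothesis Hb : forall i, i.+1 < n -> be i <= be i.+1.
Hypothesis Had : al n.-1 = d.
Hypothesis Hbd : be n.-1 = d.
Hypothesis Hab : forall i, i < n -> al i <= be i.
Hypothesis Ha0 : al 0 = 0.
Hypothesis Hb0 : be 0 = b 0.

Definition G (u : nat -> nat) := forall i, i < n ->
  u i <= b i /\ al i <= \sum_(0 <= j < i.+1) u j <= be i.
Definition IS (w : nat -> nat) := exists u, G u /\ forall j, j < n -> u j <= w j.
Definition socleN w := ~ IS w /\ forall k, k < n -> IS (fun j => w j + (j == k)).

Lemma G_total u : G u -> \sum_(0 <= j < n) u j = d.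
Proof.
move=> H; have [_ /andP[h1 h2]] := H n.-1 ltac:(lia).
by move: h1 h2; rewrite prednK // Had Hbd; lia.
Qed.

Lemma be_ge m : m < n -> be 0 <= be m.
Proof. elim: m => // m IH h; apply: leq_trans (IH _) (Hb h); lia. Qed.

Lemma splitP u i j : i <= j ->
  \sum_(0 <= k < j.+1) u k = \sum_(0 <= k < i.+1) u k + \sum_(i.+1 <= k < j.+1) u k.
Proof. by move=> h; rewrite (big_cat_nat (n:=i.+1)). Qed.

Lemma sum_le (u v : nat -> nat) a c : (forall k, a <= k < c -> u k <= v k) ->
  \sum_(a <= k < c) u k <= \sum_(a <= k < c) v k.
Proof.
move=> H; rewrite big_nat_cond [X in _ <= X]big_nat_cond.
by apply: leq_sum => k /andP[/H h _].
Qed.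

Lemma socle_conds w : socleN w ->
  [/\ (forall i, i < n -> 1 <= b i),
      (forall i, 1 <= i -> i.+2 <= n -> al i < be i),
      (forall i j, i <= j -> j.+2 <= n ->
         al j + (j - i) + 1 <= be i + \sum_(i.+1 <= k < j.+1) b k) &
      (forall i, i < n ->
         d + (n - i.+1) <= be i + \sum_(i.+1 <= k < n) b k)].
Proof.
move=> [nw hw].
have U : forall k, k < n -> exists u, [/\ G u, forall j, j < n -> j != k -> u j <= w j
   & u k = (w k).+1].
  move=> k kn; have [u [gu le]] := hw k kn; exists u; split => //.
    by move=> j jn jk; have := le j jn; rewrite (negbTE jk) addn0.
  have := le k kn; rewrite eqxx addn1 leq_eqVlt ltnS => /orP[/eqP //|h].
  case: nw; exists u; split => // j jn; have := le j jn.
  by case: (eqVneq j k) => [->|] //; rewrite addn0.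
have wb : forall k, k < n -> w k < b k.
  move=> k kn; have [u [gu _ e]] := U k kn; have [h _] := gu k kn; lia.
have hiii : forall i j, i <= j -> j.+2 <= n ->
    al j + (j - i) + 1 <= be i + \sum_(i.+1 <= k < j.+1) b k.
  move=> i j ij jn.
  rewrite (sumB1 (b:=b)); last by move=> k hk; have := wb k; lia.
  have Sw : \sum_(i.+1 <= k < j.+1) w k <= \sum_(i.+1 <= k < j.+1) (b k - 1).
    by apply: sum_le => k hk; have := wb k; lia.
  suff : al j < be i + \sum_(i.+1 <= k < j.+1) w k by lia.
  rewrite ltnNge; apply/negP => bad.
  have [u [gu ule ue]] := U n.-1 ltac:(lia).
  have [u' [gu' ule' ue']] := U 0 Hn.
  have Pi : forall v, G v -> (forall k, i.+1 <= k < j.+1 -> v k <= w k) ->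
      \sum_(0 <= k < i.+1) v k = be i.
    move=> v gv hv; have [_ /andP[h1 h2]] := gv j ltac:(lia).
    have [_ /andP[h3 h4]] := gv i ltac:(lia).
    move: h1; rewrite (splitP _ ij) => h1.
    have := sum_le hv; lia.
  have e1 := Pi u gu (fun k hk => ule k ltac:(lia) ltac:(lia)).
  have e2 := Pi u' gu' (fun k hk => ule' k ltac:(lia) ltac:(lia)).
  apply: nw; exists (fun k => if k <= i then u k else u' k); split; last first.
    move=> k kn; case: ifP => hk; [apply: ule|apply: ule']; lia.
  move=> m mn; split; first by case: ifP => _; [exact: (gu m mn).1|exact: (gu' m mn).1].
  case: (leqP m i) => hm.
    rewrite big_nat_cond (eq_bigr (fun k => u k)); last first.
      by move=> k /andP[/andP[_ hk] _]; rewrite (_ : k <= i) //; lia.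
    by rewrite -big_nat_cond; exact: (gu m mn).2.
  rewrite (splitP _ (ltnW hm)) big_nat_cond (eq_bigr (fun k => u k)); last first.
    by move=> k /andP[/andP[_ hk] _]; rewrite (_ : k <= i) //; lia.
  rewrite -big_nat_cond e1 big_nat_cond (eq_bigr (fun k => u' k)); last first.
    by move=> k /andP[/andP[hk _] _]; rewrite (_ : k <= i = false) //; lia.
  rewrite -big_nat_cond -e2 -splitP; [exact: (gu' m mn).2|lia].
split => //.
- by move=> i /wb; lia.
- by move=> i i1 i2; have := hiii i i (leqnn _) i2; rewrite big_geq //; lia.
move=> i inn.
have [u' [gu' ule' ue']] := U 0 Hn.
have tot : \sum_(0 <= k < n.-1.+1) u' k = d by rewrite prednK //; exact: G_total gu'.
rewrite (@splitP _ i n.-1) ?prednK in tot; last lia.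
have [_ /andP[_ h]] := gu' i inn.
rewrite (sumB1 (b:=b)); last by move=> k hk; have := wb k; lia.
have : \sum_(i.+1 <= k < n) u' k <= \sum_(i.+1 <= k < n) (b k - 1).
  apply: sum_le => k hk; have := wb k; have := ule' k; lia.
lia.
exact: Hn.
Qed.


Fixpoint P (m : nat) : nat :=
  if m is m'.+1 then minn (be m' - 1) (P m' + b m' - 1) else 0.

Definition wdef j := if j.+1 < n then P j.+1 - P j else d - 1 - P j.

Lemma conds_socle :
  [/\ (forall i, i < n -> 1 <= b i),
      (forall i, 1 <= i -> i.+2 <= n -> al i < be i),
      (forall i j, i <= j -> j.+2 <= n ->
         al j + (j - i) + 1 <= be i + \sum_(i.+1 <= k < j.+1) b k) &
      (forall i, i < n ->
         d + (n - i.+1) <= be i + \sum_(i.+1 <= k < n) b k)] -> socleN wdef.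
Proof.
case=> b1 _ hiii hiv.
have n2 : 1 < n.
  rewrite ltnNge; apply/negP => h; have e : n.-1 = 0 by lia.
  move: Had Hbd (b1 0 Hn); rewrite e Ha0 Hb0; lia.
have beP : forall m, m < n -> 1 <= be m.
  by move=> m mn; have := be_ge mn; have := b1 0 Hn; lia.
have Pup : forall m, P m.+1 <= be m - 1 by move=> m /=; lia.
have Pst : forall m, P m.+1 <= P m + b m - 1 by move=> m /=; lia.
have Pmono : forall m, m < n -> P m <= P m.+1.
  case=> [|m] mn; first by [].
  have := Pup m; have := Hb mn; have := b1 _ mn; have e : P m.+2 = minn (be m.+1 - 1) (P m.+1 + b m.+1 - 1) by [].
  rewrite e; lia.
have Wi : forall m, m < n -> \sum_(0 <= j < m) wdef j = P m.
  elim=> [|m IH] mn; first by rewrite big_geq.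
  rewrite big_nat_recr // IH; last lia.
  rewrite /wdef mn; exact: subnKC (Pmono m ltac:(lia)).
have PL : P n.-1 <= d - 1.
  case e : n.-1 => [|m] //; have := Pup m; have := Hb (i:=m) ltac:(lia).
  rewrite -e Hbd; lia.
have tot : \sum_(0 <= j < n) wdef j = d - 1.
  rewrite -(prednK Hn) big_nat_recr //= Wi; last lia.
  rewrite /wdef prednK // ltnn; lia.
have Inv : forall m, m.+2 <= n ->
   (forall t, m <= t -> t.+2 <= n ->
       al t <= P m.+1 + \sum_(m.+1 <= k < t.+1) (b k - 1)) /\
   d - 1 <= P m.+1 + \sum_(m.+1 <= k < n) (b k - 1).
  elim=> [|m IH] mn.
    have P1 : P 1 = b 0 - 1 by rewrite /= Hb0; lia.
    rewrite P1; split.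
      move=> t _ tn; have := hiii 0 t (leq0n _) tn.
      rewrite (sumB1 (b:=b)); last by move=> k hk; apply: b1; lia.
      rewrite -Hb0; have := b1 0 Hn; lia.
    have := hiv 0 Hn.
    rewrite (sumB1 (b:=b)); last by move=> k hk; apply: b1; lia.
    rewrite -Hb0; have := b1 0 Hn; lia.
  have [IH1 IH2] := IH ltac:(lia).
  have e : P m.+2 = minn (be m.+1 - 1) (P m.+1 + b m.+1 - 1) by [].
  split.
    move=> t ht tn; have := IH1 t ltac:(lia) tn.
    rewrite (big_ltn (m:=m.+1)); last lia.
    have := hiii m.+1 t ht tn.
    rewrite (sumB1 (b:=b)); last by move=> k hk; apply: b1; lia.
    rewrite e; have := b1 m.+1 ltac:(lia); lia.
  have := IH2; rewrite (big_ltn (m:=m.+1)); last lia.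
  have := hiv m.+1 ltac:(lia).
  rewrite (sumB1 (b:=b)); last by move=> k hk; apply: b1; lia.
  rewrite e; have := b1 m.+1 ltac:(lia); lia.
have lastb : d - 1 <= P n.-1 + (b n.-1 - 1).
  case e : n.-1 => [|m]; first lia.
  have [_ h] := Inv m ltac:(lia).
  have en : n = m.+2 by lia.
  by move: h; rewrite en big_nat1.
have d1 : 1 <= d by rewrite -Hbd; apply: beP; lia.
split.
  case=> u [gu le]; have := G_total gu; have := sum_le (a:=0) le.
  rewrite tot; lia.
move=> k kn; exists (fun j => wdef j + (j == k)); split => // m mn; split.
  rewrite /wdef; case: ifP => h.
    have := Pst m; have := Pmono m mn; have := b1 m mn; case: (m == k); lia.
  have em : m = n.-1 by lia.
  move: lastb; rewrite -em; have := b1 m mn; case: (m == k); lia.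
rewrite big_split /= sum_eqk0.
case: (ltnP m.+1 n) => h.
  rewrite Wi //; have [h1 _] := Inv m h.
  have := h1 m (leqnn _) h; rewrite big_geq // addn0.
  have := Pup m; have := beP m mn; case: (k < m.+1); lia.
have em : m.+1 = n by lia.
rewrite em tot (_ : k < n) //; have e2 : m = n.-1 by lia.
rewrite e2 Had Hbd; lia.
Qed.

End Comb.

Section Alg.
Variables (K : fieldType) (n : nat) (b al be : nat -> nat).

Definition gen (u : 'X_{1..n}) : Prop :=
  forall i : 'I_n,
      (u i <= b i)%N /\
      (al i <= \sum_(j : 'I_n | (j <= i)%N) u j <= be i)%N.

Definition Iset (m : 'X_{1..n}) := exists u, gen u /\ (u <= m)%MM.

Local Open Scope ring_scope.
Local Notation I := (in_ideal (@plp_gen K n b al be)).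

Lemma mcoeffMX' (p : {mpoly K[n]}) u k :
  (p * 'X_[u])@_k = if (u <= k)%MM then p@_(k - u)%MM else 0.
Proof.
case: ifP => h.
  by rewrite -{1}(submK h) addmC mcoeffMX.
apply/eqP; rewrite mcoeff_eq0; rewrite (perm_mem (msuppMX p u)); apply/negP.
case/mapP => m' _ e; move: h; rewrite e lem_addr //.
Qed.

Lemma Iset_up m m' : Iset m -> (m <= m')%MM -> Iset m'.
Proof. by case=> u [gu le]; exists u; split => //; exact: (lepm_trans le). Qed.

Lemma A1 f : I f -> forall m, m \in msupp f -> Iset m.
Proof.
case=> s [Hs ->] m; rewrite mcoeff_msupp raddf_sum /=.
case: (classic (Iset m)) => // nI; rewrite big1_seq ?eqxx // => p /andP[_ ps].
case: (Hs p ps) => u [-> gu]; rewrite mcoeffMX'; case: ifP => // h.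
by case: nI; exists u.
Qed.

Lemma A2 f : (forall m, m \in msupp f -> Iset m) -> I f.
Proof.
move=> H; rewrite (mpolyE f).
elim: (msupp f) H => [|m r IH] H.
  by exists [::]; split => //; rewrite !big_nil.
have [s [Hs Hsum]] : I (\sum_(m0 <- r) f@_m0 *: 'X_[m0]).
  by apply: IH => m' hm'; apply: H; rewrite inE hm' orbT.
case: (H m (mem_head _ _)) => u [gu le].
exists ((f@_m *: 'X_[m - u], 'X_[u]) :: s); split.
  move=> p; rewrite inE => /orP[/eqP -> /=|/Hs //]; by exists u.
by rewrite !big_cons /= Hsum -scalerAl -mpolyXD submK.
Qed.


Lemma socle_depth0 w : ~ Iset w -> (forall k, Iset (w + U_(k))%MM) ->
  depth_quot_zero I.
Proof.
move=> nw hw; split.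
  move/A1 => /(_ 0%MM); rewrite mcoeff_msupp mcoeff1 eqxx oner_neq0 => /(_ isT) h.
  by apply: nw; apply: (Iset_up h); apply/mnm_lepP => i; rewrite mnm0E.
move=> f f0 Hreg.
have : I 'X_[w].
  apply: Hreg; apply: A2 => m; rewrite mcoeff_msupp mcoeffMX'.
  case: ifP => [le|]; last by rewrite eqxx.
  move=> nz.
  have : (m - w)%MM != 0%MM.
    by apply/negP => /eqP e; move: nz; rewrite e; move: f0; rewrite /in_max_ideal => ->; rewrite eqxx.
  case: (classic (exists k, (m - w)%MM k != 0%N)) => [[k hk] _|nk]; last first.
    move/negP; case; apply/eqP/mnmP => i; rewrite mnm0E; apply/eqP; apply: NNPP => h.
    by apply: nk; exists i; apply/negP.
  apply: (Iset_up (hw k)); apply/mnm_lepP => i.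
  move: hk (mnm_lepP le i); rewrite mnmBE mnmDE mnm1E.
  case: (eqVneq k i) => [<-|_]; lia.
move/A1 => /(_ w); rewrite msuppX mem_seq1 eqxx => /(_ isT).
exact: nw.
Qed.

Lemma box D (HD : forall u, gen u -> forall i, (u i <= D)%N)
  (NS : forall c, ~ (~ Iset c /\ forall k, Iset (c + U_(k))%MM)) (c : 'X_{1..n}) :
  (forall i, (c i <= D)%N) -> ~ Iset c ->
  exists c' k, [/\ (c <= c')%MM, forall i, (c' i <= D)%N, ~ Iset c' & c' k = D].
Proof.
move=> hc nc; move: {2}(n * D - mdeg c)%N (leqnn (n * D - mdeg c)%N) => N.
elim: N c hc nc => [|N IH] c hc nc hN;
 (case: (classic (exists k, c k = D)) => [[k ck]|nk];
   [by exists c, k; split => //; exact: lepm_refl|]);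
 (have [k nk'] : exists k, ~ Iset (c + U_(k))%MM by
   apply: NNPP => H; apply: (NS c); split => // k; apply: NNPP => H'; apply: H; exists k);
 (have lt : forall i, (c i < D)%N by
   move=> i; rewrite ltn_neqAle hc andbT; apply/eqP => e; apply: nk; exists i);
 (have hc' : forall i, ((c + U_(k))%MM i <= D)%N by
   move=> i; rewrite mnmDE mnm1E; case: eqP => _; move: (lt i); lia);
 (have hdeg : (mdeg (c + U_(k))%MM <= n * D)%N by
   rewrite mdegE; apply: (@leq_trans (\sum_(i < n) D)%N);
   [by apply: leq_sum => i _; exact: hc' | by rewrite sum_nat_const card_ord mulnC]);
 move: hdeg; rewrite mdegD mdeg1 => hdeg.
  move: hN; lia.
have [|c'' [k'' [h1 h2 h3 h4]]] := IH _ hc' nk'.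
  by rewrite mdegD mdeg1; lia.
exists c'', k''; split => //; exact: (lepm_trans (lem_addr _ _) h1).
Qed.

Lemma nsocle_reg (NS : forall c, ~ (~ Iset c /\ forall k, Iset (c + U_(k))%MM)) :
  regular_on_quot I (\sum_(i < n) 'X_i).
Proof.
move=> g Hfg; apply: A2 => w Hw; apply: NNPP => nw.
pose D := (\max_(i < n) b i)%N.
have HD : forall u, gen u -> forall i, (u i <= D)%N.
  move=> u gu i; apply: (leq_trans (gu i).1).
  by rewrite /D (bigD1 i) //= leq_maxl.
pose c0 := [multinom minn (w i) D | i < n].
have nc0 : ~ Iset c0.
  move=> h; apply: nw; apply: (Iset_up h); apply/mnm_lepP => i.
  by rewrite mnmE geq_minl.
have hc0 : forall i, (c0 i <= D)%N by move=> i; rewrite /c0 mnmE geq_minr.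
have [c [k [c0c hc nc ck]]] := box HD NS hc0 nc0.
pose Q v := [forall i, minn (v i) D <= c i]%N.
have Q1 : forall v : 'X_{1..n}, Iset v -> ~~ Q v.
  move=> v [u [gu le]]; apply/negP => /forallP Qv; apply: nc; exists u; split => //.
  apply/mnm_lepP => i; apply: leq_trans (Qv i); rewrite leq_min (mnm_lepP le i).
  exact: HD.
have Qw : Q w.
  apply/forallP => i; apply: leq_trans (mnm_lepP c0c i); by rewrite mnmE.
have Qdown : forall v v' : 'X_{1..n}, Q v' -> (v <= v')%MM -> Q v.
  move=> v v' /forallP Qv' /mnm_lepP le; apply/forallP => i.
  apply: leq_trans (Qv' i); move: (le i); lia.
have QU : forall v : 'X_{1..n}, Q v -> Q (v + U_(k))%MM.
  move=> v /forallP Qv; apply/forallP => i; rewrite mnmDE mnm1E.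
  case: (eqVneq k i) => [<-|_]; first by rewrite ck geq_minr.
  by rewrite addn0.
have step : forall v, v \in msupp g -> Q v ->
    exists2 v', v' \in msupp g & Q v' /\ v' k = (v k).+1.
  move=> v vin Qv.
  have Z : (g * \sum_(i < n) 'X_i)@_(v + U_(k)) = 0.
    apply/eqP; rewrite mcoeff_eq0; apply/negP => h.
    have := A1 Hfg; rewrite mulrC => /(_ _ h) /Q1; by rewrite QU.
  move: Z; rewrite mulr_sumr raddf_sum (bigD1 k) //= mcoeffMX' lem_addl addmK.
  move=> Z.
  case: (classic (exists2 i : 'I_n, i != k & (g * 'X_i)@_(v + U_(k)) != 0)).
    case=> i ik; rewrite mcoeffMX'; case: ifP => [le nz|]; last by rewrite eqxx.
    exists (v + U_(k) - U_(i))%MM; first by rewrite mcoeff_msupp.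
    split; first exact: (Qdown _ _ (QU _ Qv) (lem_subr _ _)).
    rewrite mnmBE mnmDE !mnm1E eqxx (negbTE ik) subn0; lia.
  move=> H; exfalso; move: vin; rewrite mcoeff_msupp => /eqP; apply.
  rewrite -Z big1 ?addr0 // => i ik; apply/eqP; apply: NNPP => h; apply: H.
  by exists i => //; apply/negP.
pose B := (\sum_(v <- msupp g) v k)%N.
have leB : forall v, v \in msupp g -> (v k <= B)%N.
  by move=> v vin; rewrite /B (bigD1_seq v vin (msupp_uniq g)) /= leq_addr.
suff : forall N (v : 'X_{1..n}), (B - v k <= N)%N -> v \in msupp g -> Q v -> False.
  by move/(_ _ w (leqnn _) Hw Qw).
elim => [|N IH] v hN vin Qv; have [v' v'in [Qv' e]] := step v vin Qv;
  have := leB _ v'in; rewrite e => h.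
  by move: hN; lia.
by apply: (IH v') => //; rewrite e; lia.
Qed.

End Alg.


Section Bridge.
Variables (n : nat) (b al be : nat -> nat).

Lemma psE (F : nat -> nat) i : (i < n)%N ->
  (\sum_(j < n | (j <= i)%N) F j = \sum_(0 <= j < i.+1) F j)%N.
Proof.
move=> h; rewrite -(big_mkord (fun j => (j <= i)%N) F) (big_cat_nat (n:=i.+1)) //=.
rewrite [X in (_ + X)%N]big_nat_cond [X in (_ + X)%N]big_pred0; last first.
  by move=> j /=; apply/negP => /andP[/andP[h1 _] h2]; lia.
rewrite addn0 big_nat_cond [X in _ = X]big_nat_cond; apply: eq_bigl => j /=.
by rewrite andbT andb_idr.
Qed.

Lemma G_ext (F F' : nat -> nat) : (forall j, (j < n)%N -> F j = F' j) ->
  G n b al be F -> G n b al be F'.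
Proof.
move=> e gF i hi; have [h1 h2] := gF i hi; rewrite -e //; split => //.
rewrite -(@eq_big_nat _ _ _ 0 i.+1 F) // => j hj; apply: e; lia.
Qed.

Lemma IS_ext (F F' : nat -> nat) : (forall j, (j < n)%N -> F j = F' j) ->
  IS n b al be F -> IS n b al be F'.
Proof.
move=> e [u [gu le]]; exists u; split => // j hj; rewrite -e //; exact: le.
Qed.

Definition mk (F : nat -> nat) : 'X_{1..n} := [multinom F i | i < n].

Lemma nth_mk F j : (j < n)%N -> nth 0%N (mk F) j = F j.
Proof. by move=> h; rewrite -[j]/(nat_of_ord (Ordinal h)) -mnm_nth mnmE. Qed.

Lemma gen_G (u : 'X_{1..n}) : gen b al be u <-> G n b al be (fun j => nth 0%N u j).
Proof.
split.
  move=> gu i hi; have [h1 h2] := gu (Ordinal hi); split.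
    by move: h1; rewrite (mnm_nth 0%N).
  move: h2; rewrite (eq_bigr (fun j : 'I_n => nth 0%N u j)); last by move=> j _; rewrite (mnm_nth 0%N).
  by rewrite psE.
move=> gu i; have [h1 h2] := gu i (ltn_ord i); split.
  by rewrite (mnm_nth 0%N).
rewrite (eq_bigr (fun j : 'I_n => nth 0%N u j)); last by move=> j _; rewrite (mnm_nth 0%N).
by rewrite psE.
Qed.

Lemma IsetE (w : 'X_{1..n}) : Iset b al be w <-> IS n b al be (fun j => nth 0%N w j).
Proof.
split.
  case=> u [/gen_G gu le]; exists (fun j => nth 0%N u j); split => // j hj.
  by have := mnm_lepP le (Ordinal hj); rewrite !(mnm_nth 0%N).
case=> F [gF le]; exists (mk F); split.
  by apply/gen_G; apply: (G_ext _ gF) => j hj; rewrite nth_mk.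
apply/mnm_lepP => i; rewrite mnmE (mnm_nth 0%N w); exact: le.
Qed.

Lemma socle_link (w : 'X_{1..n}) :
  ~ Iset b al be w -> (forall k, Iset b al be (w + U_(k))%MM) ->
  socleN n b al be (fun j => nth 0%N w j).
Proof.
move=> nw hw; split; first by move/IsetE.
move=> k kn; have := hw (Ordinal kn); move/IsetE; apply: IS_ext => j hj.
rewrite -[j]/(nat_of_ord (Ordinal hj)) -!mnm_nth mnmDE mnm1E; congr addn.
by rewrite eq_sym.
Qed.

Lemma socle_link2 (F : nat -> nat) : socleN n b al be F ->
  ~ Iset b al be (mk F) /\ (forall k, Iset b al be (mk F + U_(k))%MM).
Proof.
case=> nF hF; split.
  move/IsetE => h; apply: nF; apply: (IS_ext _ h) => j hj; by rewrite nth_mk.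
move=> k; apply/IsetE; apply: (IS_ext _ (hF k (ltn_ord k))) => j hj.
rewrite -[j]/(nat_of_ord (Ordinal hj)) -mnm_nth mnmDE mnm1E -(nth_mk F hj).
by rewrite (mnm_nth 0%N) eq_sym.
Qed.

End Bridge.

Local Open Scope ring_scope.

Theorem corollary3p4 (K : fieldType) (n d : nat) (b alpha beta : nat -> nat) :
  (0 < n)%N ->
  (forall i, (i.+1 < n)%N -> (alpha i <= alpha i.+1)%N) ->
  (forall i, (i.+1 < n)%N -> (beta i <= beta i.+1)%N) ->
  alpha n.-1 = d -> beta n.-1 = d ->
  (forall i, (i < n)%N -> (alpha i <= beta i)%N) ->
  alpha 0%N = 0%N -> beta 0%N = b 0%N ->
  depth_quot_zero (in_ideal (@plp_gen K n b alpha beta))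
  <->
  [/\ (forall i, (i < n)%N -> (1 <= b i)%N),
      (forall i, (1 <= i)%N -> (i.+2 <= n)%N -> (alpha i < beta i)%N),
      (forall i j, (i <= j)%N -> (j.+2 <= n)%N ->
         (alpha j + (j - i) + 1 <= beta i + \sum_(i.+1 <= k < j.+1) b k)%N) &
      (forall i, (i < n)%N ->
         (d + (n - i.+1) <= beta i + \sum_(i.+1 <= k < n) b k)%N)].
Proof.
move=> Hn Ha Hb Had Hbd Hab Ha0 Hb0; split.
  case=> n1 nreg.
  case: (classic (exists w : 'X_{1..n}, ~ Iset b alpha beta w /\
           forall k, Iset b alpha beta (w + U_(k))%MM)) => [[w [nw hw]]|NS].
    exact: (socle_conds Hn Had Hbd Ha0 Hb0 (socle_link nw hw)).
  exfalso; apply: (nreg (\sum_(i < n) 'X_i)).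
    rewrite /in_max_ideal raddf_sum /=; apply: big1 => i _.
    by rewrite mcoeffX mnm1_eq0.
  apply: nsocle_reg => c [nc hc]; apply: NS; by exists c.
move=> conds.
have [nw hw] := socle_link2 (conds_socle Hn Hb Had Hbd Ha0 Hb0 conds).
exact: (@socle_depth0 K n b alpha beta _ nw hw).
Qed.
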